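(* Let $\gamma,\lambda\in\mathbb{C}$ and let $u,v:\mathbb{Z}^2\to\mathbb{C}$ satisfy, for all $(l,m)\in\mathbb{Z}^2$ (with all denominators nonzero), \[ \frac{\widetilde{\overline u}}{u}=\frac{(\gamma\widetilde u-1)(\gamma-\overline u)}{(\gamma-\widetilde u)(\gamma\overline u-1)},\qquad (1-\gamma\overline u)(\lambda+\gamma\widetilde v)-(\gamma-\overline u)(\gamma-\widetilde{\overline v})u\widetilde v=0, \] \[ (\lambda+\gamma\widetilde v-u\widetilde v)(1-\gamma u+uv)+(1-\gamma^2-\lambda)uv=0,\qquad (1-\gamma u)(\lambda+\gamma v)-(\gamma-u)(\gamma-\overline v)\overline u v=0. \] Then $v$ satisfies, for all $(l,m)$, \[ \begin{aligned} &\gamma^2\big(v-\widetilde{\overline v}\big)\big(\overline v-\widetilde v\big)\big(\lambda+v\overline v\big)\big(\lambda+\widetilde v\widetilde{\overline v}\big)-(1-\gamma^2)(\gamma^2-\lambda)\big(v\overline v-\widetilde v\widetilde{\overline v}\big)^2\\ &\quad+\gamma(1-\gamma^2)\big(v\overline v-\widetilde v\widetilde{\overline v}\big)\Big(\big(\lambda+v\overline v\big)\big(\widetilde v+\widetilde{\overline v}\big)-\big(v+\overline v\big)\big(\lambda+\widetilde v\widetilde{\overline v}\big)\Big)=0. \end{aligned} \]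
   Context: Shift notation: for $f:\mathbb{Z}^2\to\mathbb{C}$, $f=f_{l,m}$, $\overline f=f_{l+1,m}$, $\widetilde f=f_{l,m+1}$, $\widetilde{\overline f}=f_{l+1,m+1}$. *)

(* Defs.v *)
From HB Require Import structures.
From mathcomp Require Import all_boot all_order all_algebra.
From mathcomp Require Import complex.
From mathcomp Require Import Rstruct.
Set Implicit Arguments. Unset Strict Implicit. Unset Printing Implicit Defensive.
Import Order.TTheory GRing.Theory Num.Theory.
Local Open Scope ring_scope.

Definition CC : numClosedFieldType := (Rdefinitions.R)[i].

(* Main.v *)
Require Import Defs.
From HB Require Import structures.
From mathcomp Require Import all_boot all_order all_algebra.
From mathcomp Require Import complex Rstruct.
Import Order.TTheory GRing.Theory Num.Theory.
Local Open Scope ring_scope.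
From mathcomp Require Import ring.

Definition TT {F : fieldType} (g L v0 v1 v2 v12 : F) :=
    g ^+ 2 * (v0 - v12) * (v1 - v2) * (L + v0 * v1) * (L + v2 * v12)
    - (1 - g ^+ 2) * (g ^+ 2 - L) * (v0 * v1 - v2 * v12) ^+ 2
    + g * (1 - g ^+ 2) * (v0 * v1 - v2 * v12)
      * ((L + v0 * v1) * (v2 + v12) - (v0 + v1) * (L + v2 * v12)).

Lemma generic (F : fieldType) (g L u0 u1 v0 v1 v2 v12 : F) :
  g - u0 != 0 -> g - u1 != 0 -> v0 != 0 -> g - v1 != 0 ->
  1 - g*u0 + u0*v0 != 0 -> 1 - g*u1 + u1*v1 != 0 ->
  u1 = (1 - g * u0) * (L + g * v0) / ((g - u0) * (g - v1) * v0) ->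
  v2 = - (L * (1 - g*u0 + u0*v0) + (1 - g^+2 - L) * u0 * v0) / ((g - u0) * (1 - g*u0 + u0*v0)) ->
  v12 = - (L * (1 - g*u1 + u1*v1) + (1 - g^+2 - L) * u1 * v1) / ((g - u1) * (1 - g*u1 + u1*v1)) ->
  TT g L v0 v1 v2 v12 = 0.
Proof.
move=> h1 h2 h3 h4 h5 h6 e1 e2 e3.
rewrite e3 e2. move: h2 h6. rewrite e1 => h2 h6.
rewrite /TT. field.
set D := (g - u0) * (g - v1) * v0.
have hD : D != 0 by rewrite !mulf_neq0.
set N := (1 - g * u0) * (L + g * v0).
have -> : D - g * N + N * v1 = (1 - g * (N / D) + N / D * v1) * D by field.
have -> : g * D - N = (g - N / D) * D by field.
by rewrite h1 h3 h4 h5 !mulf_neq0.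
Qed.

Lemma lin (F : fieldType) (a b c : F) : a = 0 -> b = c * a -> b = 0.
Proof. by move=> -> ->; rewrite mulr0. Qed.
Lemma lin3 (F : fieldType) (a1 a2 a3 b c1 c2 c3 : F) : a1 = 0 -> a2 = 0 -> a3 = 0 -> b = c1 * a1 + c2 * a2 + c3 * a3 -> b = 0.
Proof. by move=> -> -> -> ->; rewrite !mulr0 !addr0. Qed.
Lemma solve (F : fieldType) (x X Y a c : F) : Y != 0 -> a = 0 -> x * Y - X = c * a -> x = X / Y.
Proof. by move=> hY ha e; apply: (mulIf hY); rewrite divfK //; apply/eqP; rewrite -subr_eq0 e ha mulr0. Qed.
Lemma lin2 (F : fieldType) (a1 a2 b c1 c2 : F) : a1 = 0 -> a2 = 0 -> b = c1 * a1 + c2 * a2 -> b = 0.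
Proof. by move=> -> -> ->; rewrite !mulr0 addr0. Qed.

Lemma core (F : fieldType) (g L u0 u1 v0 v1 v2 v12 : F) :
  u0 != 0 -> u1 != 0 -> g - u0 != 0 -> g - u1 != 0 -> 1 - g*u0 != 0 -> 1 - g*u1 != 0 ->
  (1 - g * u1) * (L + g * v2) - (g - u1) * (g - v12) * u0 * v2 = 0 ->
  (L + g * v2 - u0 * v2) * (1 - g * u0 + u0 * v0) + (1 - g ^+ 2 - L) * u0 * v0 = 0 ->
  (L + g * v12 - u1 * v12) * (1 - g * u1 + u1 * v1) + (1 - g ^+ 2 - L) * u1 * v1 = 0 ->
  (1 - g * u0) * (L + g * v0) - (g - u0) * (g - v1) * u1 * v0 = 0 ->
  TT g L v0 v1 v2 v12 = 0.
Proof.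
move=> hu0 hu1 hgu0 hgu1 hgu0' hgu1' E2 E30 E31 E4.
have R : (g - u0) * (v0 * (1 - g*u1 + u1*v1) - v2 * (1 - g*u0 + u0*v0)) = 0.
  by apply: (@lin2 _ _ _ _ 1 (-1) E4 E30); ring.
have {R}R : v0 * (1 - g*u1 + u1*v1) = v2 * (1 - g*u0 + u0*v0).
  by apply/eqP; rewrite -subr_eq0; apply/eqP; move/eqP: R; rewrite mulf_eq0 (negbTE hgu0) => /eqP.
have [v00|v0n0] := eqVneq v0 0.
  subst v0.
  have L0 : L = 0.
    by move: E4; rewrite !(mulr0, mul0r, subr0, addr0) => /eqP; rewrite mulf_eq0 (negbTE hgu0') => /eqP.
  subst L.
  have v20 : v2 = 0.
    have : (g - u0) * v2 * (1 - g*u0) = 0 by apply: (@lin _ _ _ 1 E30); ring.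
    by move/eqP; rewrite !mulf_eq0 (negbTE hgu0) (negbTE hgu0') orbF => /eqP.
  subst v2. rewrite /TT; ring.
have [v1g|v1ng] := eqVneq v1 g.
  subst v1.
  have eL : L = - (g * v0).
    move: E4; rewrite subrr !(mulr0, mul0r, subr0) => /eqP.
    by rewrite mulf_eq0 (negbTE hgu0') /= addr_eq0 => /eqP.
  subst L. rewrite /TT; ring.
have gv1 : g - v1 != 0 by rewrite subr_eq0 eq_sym.
have [w00|w0n0] := eqVneq (1 - g*u0 + u0*v0) 0.
  have eL : L = 1 - g ^+ 2.
    have : (1 - g ^+ 2 - L) * u0 * v0 = 0.
      by apply: (@lin2 _ _ _ _ (-(L + g * v2 - u0 * v2)) 1 w00 E30); ring.
    move/eqP; rewrite !mulf_eq0 (negbTE hu0) (negbTE v0n0) !orbF subr_eq0 => /eqP <-.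
    ring.
  have w10 : 1 - g*u1 + u1*v1 = 0.
    by move: R; rewrite w00 mulr0 => /eqP; rewrite mulf_eq0 (negbTE v0n0) => /eqP.
  have ev0 : v0 = (g * u0 - 1) / u0 by apply: (@solve _ _ _ _ _ 1 hu0 w00); ring.
  have ev1 : v1 = (g * u1 - 1) / u1 by apply: (@solve _ _ _ _ _ 1 hu1 w10); ring.
  have [den0|den] := eqVneq ((1 - g*u1)*g - (g-u1)*(g-v12)*u0) 0.
    have L0 : L = 0.
      have : (1 - g * u1) * L = 0 by apply: (@lin2 _ _ _ _ (-v2) 1 den0 E2); ring.
      by move/eqP; rewrite mulf_eq0 (negbTE hgu1') => /eqP.
    have hg : g ^+ 2 = 1 by apply/eqP; rewrite eq_sym -subr_eq0 -eL L0.
    have ev12 : v12 = v0.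
      have : (g - u1) * u0 * (v12 - v0) = 0.
        apply: (@lin3 _ _ _ _ _ 1 (-(g-u1)) (-u1) den0 w00 (_ : 1 - g ^+ 2 = 0)).
          by rewrite hg subrr.
        ring.
      by move/eqP; rewrite !mulf_eq0 (negbTE hgu1) (negbTE hu0) /= subr_eq0 => /eqP.
    rewrite /TT ev12 L0 hg; ring.
  have ev2 : v2 = - ((1 - g*u1) * L) / ((1 - g*u1)*g - (g-u1)*(g-v12)*u0).
    by apply: (@solve _ _ _ _ _ 1 den E2); ring.
  rewrite /TT ev2 eL ev0 ev1. field.
  by rewrite den hu0 hu1.
have [w10|w1n0] := eqVneq (1 - g*u1 + u1*v1) 0.
  have v20 : v2 = 0.
    by move: R; rewrite w10 mulr0 => /eqP; rewrite eq_sym mulf_eq0 (negbTE w0n0) orbF => /eqP.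
  have v1n0 : v1 != 0.
    by apply/eqP => v10; move: w10; rewrite v10 mulr0 addr0; apply/eqP.
  have eL : L = 1 - g ^+ 2.
    have : (1 - g ^+ 2 - L) * u1 * v1 = 0.
      by apply: (@lin2 _ _ _ _ (-(L + g * v12 - u1 * v12)) 1 w10 E31); ring.
    move/eqP; rewrite !mulf_eq0 (negbTE hu1) (negbTE v1n0) !orbF subr_eq0 => /eqP <-.
    ring.
  have L0 : L = 0.
    have : L * (1 - g*u0 + u0*v0) = 0.
      apply: (@lin2 _ _ _ _ 1 (-u0*v0) E30 (_ : 1 - g ^+ 2 - L = 0)).
        by rewrite eL subrr.
      rewrite v20; ring.
    by move/eqP; rewrite mulf_eq0 (negbTE w0n0) orbF => /eqP.
  have hg : g ^+ 2 = 1 by apply/eqP; rewrite eq_sym -subr_eq0 -eL L0.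
  rewrite /TT v20 L0 hg; ring.
apply: (@generic F g L u0 u1 v0 v1 v2 v12 hgu0 hgu1 v0n0 gv1 w0n0 w1n0).
- by apply: (@solve _ _ _ _ _ (-1) _ E4); [rewrite !mulf_neq0 | ring].
- by apply: (@solve _ _ _ _ _ 1 _ E30); [rewrite !mulf_neq0 | ring].
- by apply: (@solve _ _ _ _ _ 1 _ E31); [rewrite !mulf_neq0 | ring].
Qed.

Theorem mainTheorem11 (gamma lambda : CC) (u v : int -> int -> CC)
  (* denominators nonzero *)
  (Hu0 : forall l m, u l m != 0)
  (Hd1 : forall l m, gamma - u l (m + 1) != 0)
  (Hd2 : forall l m, gamma * u (l + 1) m - 1 != 0)
  (E1 : forall l m,
     u (l + 1) (m + 1) / u l m =
     ((gamma * u l (m + 1) - 1) * (gamma - u (l + 1) m)) /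
     ((gamma - u l (m + 1)) * (gamma * u (l + 1) m - 1)))
  (E2 : forall l m,
     (1 - gamma * u (l + 1) m) * (lambda + gamma * v l (m + 1))
     - (gamma - u (l + 1) m) * (gamma - v (l + 1) (m + 1)) * u l m * v l (m + 1) = 0)
  (E3 : forall l m,
     (lambda + gamma * v l (m + 1) - u l m * v l (m + 1)) * (1 - gamma * u l m + u l m * v l m)
     + (1 - gamma ^+ 2 - lambda) * u l m * v l m = 0)
  (E4 : forall l m,
     (1 - gamma * u l m) * (lambda + gamma * v l m)
     - (gamma - u l m) * (gamma - v (l + 1) m) * u (l + 1) m * v l m = 0) :
  forall l m,
    let v0 := v l m in
    let v1 := v (l + 1) m in
    let v2 := v l (m + 1) in
    let v12 := v (l + 1) (m + 1) in
    gamma ^+ 2 * (v0 - v12) * (v1 - v2) * (lambda + v0 * v1) * (lambda + v2 * v12)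
    - (1 - gamma ^+ 2) * (gamma ^+ 2 - lambda) * (v0 * v1 - v2 * v12) ^+ 2
    + gamma * (1 - gamma ^+ 2) * (v0 * v1 - v2 * v12)
      * ((lambda + v0 * v1) * (v2 + v12) - (v0 + v1) * (lambda + v2 * v12)) = 0.
Proof.
move=> l m v0 v1 v2 v12.
have n1 : forall x, gamma - u x m != 0.
  by move=> x; have := Hd1 x (m - 1); rewrite subrK.
have n2 : forall x, 1 - gamma * u x m != 0.
  by move=> x; have := Hd2 (x - 1) m; rewrite subrK -oppr_eq0 opprB.
exact: (@core CC gamma lambda (u l m) (u (l+1) m) v0 v1 v2 v12
  (Hu0 l m) (Hu0 (l+1) m) (n1 l) (n1 (l+1)) (n2 l) (n2 (l+1))
  (E2 l m) (E3 l m) (E3 (l+1) m) (E4 l m)).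
Qed.
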